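(* Let $\mathcal C$ be a pseudo-purifiable discard category, let $(A_i)_{i\ge1}$, $(B_i)_{i\ge1}$ be sequences of objects, and let $(f_k)_{k\ge1}$ with $f_k\in\mathcal C(A_1\otimes\cdots\otimes A_k,B_1\otimes\cdots\otimes B_k)$ be a monotone and regular sequence. Then there exists a regular stateful morphism sequence $\alpha$ over $\mathcal C$ with inputs $(A_i)$ and outputs $(B_i)$ such that $\mathrm{FA}_k(\alpha)=f_k$ for all $k\ge1$. (That is, the functor $\mathrm{FA}$ from regular stateful morphism sequences to finite approximation sequences is full.)
   Context: Monoidal categories are treated as strict; $\sigma$ is the symmetry; write $\hat A_k=A_1\otimes\cdots\otimes A_k$. A discard category is a symmetric monoidal category with, for each object $A$, $\top_A:A\to I$ with $\top_I=\mathrm{id}_I$, $\top_{A\otimes B}=\top_A\otimes\top_B$; $f$ is causal if $\top\circ f=\top$. For $f,g\in\mathcal C(A,B)$, $f\preceq g$ iff there are $X$, $g_0\in\mathcal C(A,B\otimes X)$, $f_0\in\mathcal C(X,I)$ with $f=(\mathrm{id}_B\otimes f_0)\circ g_0$ and $g=(\mathrm{id}_B\otimes\top_X)\circ g_0$. $p\in\mathcal C(A,B\otimes X)$ is a pseudo-purification of $f\in\mathcal C(A,B)$ ($p\in\mathrm{Pure}(f)$) if for every $Y$ and $g\in\mathcal C(A,B\otimes Y)$ with $f=(\mathrm{id}_B\otimes\top_Y)\circ g$ there is a causal $c\in\mathcal C(X,Y)$ with $g=(\mathrm{id}_B\otimes c)\circ p$. Pseudo-purifiable: every morphism has a pseudo-purification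 and, for $f_1\in\mathcal C(A_1,B_1\otimes C)$, $f_2\in\mathcal C(C\otimes A_2,B_2)$, $p_1\in\mathrm{Pure}(f_1)$, $p_1:A_1\to B_1\otimes C\otimes X_1$, $p_2\in\mathrm{Pure}(f_2)$, $p_2:C\otimes A_2\to B_2\otimes X_2$, the morphism $(\mathrm{id}_{B_1\otimes B_2}\otimes\sigma_{X_2,X_1})\circ(\mathrm{id}_{B_1}\otimes p_2\otimes\mathrm{id}_{X_1})\circ(\mathrm{id}_{B_1\otimes C}\otimes\sigma_{X_1,A_2})\circ(p_1\otimes\mathrm{id}_{A_2})$ is in $\mathrm{Pure}((\mathrm{id}_{B_1}\otimes f_2)\circ(f_1\otimes\mathrm{id}_{A_2}))$. The sequence $(f_k)$ is monotone if for every $k\ge1$: $(\mathrm{id}_{\hat B_k}\otimes\top_{B_{k+1}})\circ f_{k+1}\preceq f_k\otimes\top_{A_{k+1}}$. It is regular if there exist $n\ge1$, objects $A',B',M$ with $A_k=A'$ and $B_k=B'$ for all $k>n$, and morphisms $g^{\mathrm{irreg}}\in\mathcal C(\hat A_n,\hat B_n\otimes M)$, $g^{\mathrm{reg}}\in\mathcal C(M\otimes A',B'\otimes M)$ such that, setting $\Psi_n=g^{\mathrm{irreg}}$ and $\Psi_{k+1}=(\mathrm{id}_{\hat B_k}\otimes g^{\mathrm{reg}})\circ(\Psi_k\otimes\mathrm{id}_{A_{k+1}})$, we have $f_k=(\mathrm{id}_{\hat B_k}\otimes\top_M)\circ\Psi_k$ for all $k\ge n$. A stateful morphism sequence $\alpha$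 consists of objects $(A_i)_{i\ge1},(B_i)_{i\ge1},(M_i)_{i\ge0}$ with $M_0=I$ and layers $\alpha_i\in\mathcal C(A_i\otimes M_{i-1},B_i\otimes M_i)$; it is regular if there is $n$ with $A_k=A_n,B_k=B_n,M_k=M_n,\alpha_k=\alpha_n$ for all $k\ge n$. With $\Phi_1=\alpha_1$ and $\Phi_{k+1}=(\mathrm{id}_{\hat B_k}\otimes\alpha_{k+1})\circ(\mathrm{id}_{\hat B_k}\otimes\sigma_{M_k,A_{k+1}})\circ(\Phi_k\otimes\mathrm{id}_{A_{k+1}})$, set $\mathrm{FA}_k(\alpha)=(\mathrm{id}_{\hat B_k}\otimes\top_{M_k})\circ\Phi_k$. *)

(* Defs.v *)
(* Strict symmetric monoidal (discard)
   categories in the one-sorted ("arrows-only") presentation: a type of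
   objects, a type of morphisms with domain/codomain maps; composition and
   the other operations are total functions whose axioms are required only
   on well-typed arguments.  This avoids transports along the (propositional)
   strictness equalities of objects. *)
Set Implicit Arguments.

Record DiscardCat := {
  Ob : Type;
  Mor : Type;
  dom : Mor -> Ob;
  cod : Mor -> Ob;
  idm : Ob -> Mor;
  comp : Mor -> Mor -> Mor;          (* comp g f = g o f *)
  unitO : Ob;
  tO : Ob -> Ob -> Ob;
  tM : Mor -> Mor -> Mor;
  sig : Ob -> Ob -> Mor;
  top : Ob -> Mor;
  dom_id : forall A, dom (idm A) = A;
  cod_id : forall A, cod (idm A) = A;
  dom_comp : forall f g, cod f = dom g -> dom (comp g f) = dom f;
  cod_comp : forall f g, cod f = dom g -> cod (comp g f) = cod g;
  comp_id_l : forall f, comp (idm (cod f)) f = f;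
  comp_id_r : forall f, comp f (idm (dom f)) = f;
  comp_assoc : forall f g h, cod f = dom g -> cod g = dom h ->
      comp h (comp g f) = comp (comp h g) f;
  tO_assoc : forall A B C, tO (tO A B) C = tO A (tO B C);
  tO_unit_l : forall A, tO unitO A = A;
  tO_unit_r : forall A, tO A unitO = A;
  dom_tM : forall f g, dom (tM f g) = tO (dom f) (dom g);
  cod_tM : forall f g, cod (tM f g) = tO (cod f) (cod g);
  tM_id : forall A B, tM (idm A) (idm B) = idm (tO A B);
  tM_comp : forall f g f' g', cod f = dom g -> cod f' = dom g' ->
      tM (comp g f) (comp g' f') = comp (tM g g') (tM f f');
  tM_assoc : forall f g h, tM (tM f g) h = tM f (tM g h);
  tM_unit_l : forall f, tM (idm unitO) f = f;
  tM_unit_r : forall f, tM f (idm unitO) = f;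
  dom_sig : forall A B, dom (sig A B) = tO A B;
  cod_sig : forall A B, cod (sig A B) = tO B A;
  sig_nat : forall f g,
      comp (sig (cod f) (cod g)) (tM f g) = comp (tM g f) (sig (dom f) (dom g));
  sig_inv : forall A B, comp (sig B A) (sig A B) = idm (tO A B);
  sig_hex : forall A B C,
      sig A (tO B C) = comp (tM (idm B) (sig A C)) (tM (sig A B) (idm C));
  dom_top : forall A, dom (top A) = A;
  cod_top : forall A, cod (top A) = unitO;
  top_unit : top unitO = idm unitO;
  top_tO : forall A B, top (tO A B) = tM (top A) (top B)
}.

Section Defs.
Variable C : DiscardCat.

Definition hom (f : Mor C) (A B : Ob C) : Prop := dom C f = A /\ cod C f = B.

Definition causal (A B : Ob C) (c : Mor C) : Prop :=
  comp C (top C B) c = top C A.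

Definition preceq (A B : Ob C) (f g : Mor C) : Prop :=
  exists (X : Ob C) (g0 f0 : Mor C),
    hom g0 A (tO C B X) /\ hom f0 X (unitO C) /\
    f = comp C (tM C (idm C B) f0) g0 /\
    g = comp C (tM C (idm C B) (top C X)) g0.

Definition Pure (A B X : Ob C) (f p : Mor C) : Prop :=
  hom p A (tO C B X) /\
  forall (Y : Ob C) (g : Mor C), hom g A (tO C B Y) ->
    f = comp C (tM C (idm C B) (top C Y)) g ->
    exists c : Mor C, hom c X Y /\ causal X Y c /\
      g = comp C (tM C (idm C B) c) p.

Definition pseudo_purifiable : Prop :=
  (forall (A B : Ob C) (f : Mor C), hom f A B ->
     exists (X : Ob C) (p : Mor C), Pure A B X f p) /\
  (forall (A1 B1 Cc A2 B2 X1 X2 : Ob C) (f1 f2 p1 p2 : Mor C),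
     hom f1 A1 (tO C B1 Cc) -> hom f2 (tO C Cc A2) B2 ->
     Pure A1 (tO C B1 Cc) X1 f1 p1 ->
     Pure (tO C Cc A2) B2 X2 f2 p2 ->
     Pure (tO C A1 A2) (tO C B1 B2) (tO C X1 X2)
       (comp C (tM C (idm C B1) f2) (tM C f1 (idm C A2)))
       (comp C (tM C (idm C (tO C B1 B2)) (sig C X2 X1))
         (comp C (tM C (tM C (idm C B1) p2) (idm C X1))
           (comp C (tM C (idm C (tO C B1 Cc)) (sig C X1 A2))
             (tM C p1 (idm C A2)))))).

(* hat A k = A_1 (x) ... (x) A_k  (hat A 0 = I); index 0 of A is unused *)
Fixpoint hat (A : nat -> Ob C) (k : nat) : Ob C :=
  match k with
  | 0 => unitO C
  | S k' => tO C (hat A k') (A (S k'))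
  end.

Definition monotone (A B : nat -> Ob C) (f : nat -> Mor C) : Prop :=
  forall k, 1 <= k ->
    preceq (hat A (S k)) (hat B k)
      (comp C (tM C (idm C (hat B k)) (top C (B (S k)))) (f (S k)))
      (tM C (f k) (top C (A (S k)))).

(* psi_seq ... m = Psi_{n+m} *)
Fixpoint psi_seq (A B : nat -> Ob C) (n : nat) (girr greg : Mor C) (m : nat)
  : Mor C :=
  match m with
  | 0 => girr
  | S m' => comp C (tM C (idm C (hat B (n + m'))) greg)
                   (tM C (psi_seq A B n girr greg m') (idm C (A (S (n + m')))))
  end.

Definition regular_seq (A B : nat -> Ob C) (f : nat -> Mor C) : Prop :=
  exists (n : nat) (A' B' M : Ob C) (girr greg : Mor C),
    1 <= n /\
    (forall k, n < k -> A k = A' /\ B k = B') /\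
    hom girr (hat A n) (tO C (hat B n) M) /\
    hom greg (tO C M A') (tO C B' M) /\
    (forall k, n <= k ->
       f k = comp C (tM C (idm C (hat B k)) (top C M)) (psi_seq A B n girr greg (k - n))).

(* stateful morphism sequence with inputs A, outputs B, memories M, layers alpha *)
Definition stateful (A B M : nat -> Ob C) (alpha : nat -> Mor C) : Prop :=
  M 0 = unitO C /\
  forall i, 1 <= i -> hom (alpha i) (tO C (A i) (M (i - 1))) (tO C (B i) (M i)).

Definition regular_stateful (A B M : nat -> Ob C) (alpha : nat -> Mor C) : Prop :=
  exists n, 1 <= n /\ forall k, n <= k ->
    A k = A n /\ B k = B n /\ M k = M n /\ alpha k = alpha n.

(* phi_seq ... m = Phi_{m+1} *)
Fixpoint phi_seq (A B M : nat -> Ob C) (alpha : nat -> Mor C) (m : nat) : Mor C :=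
  match m with
  | 0 => alpha 1
  | S m' =>
      comp C (tM C (idm C (hat B (S m'))) (alpha (S (S m'))))
        (comp C (tM C (idm C (hat B (S m'))) (sig C (M (S m')) (A (S (S m')))))
           (tM C (phi_seq A B M alpha m') (idm C (A (S (S m'))))))
  end.

Definition Phi (A B M : nat -> Ob C) (alpha : nat -> Mor C) (k : nat) : Mor C :=
  phi_seq A B M alpha (k - 1).

Definition FA (A B M : nat -> Ob C) (alpha : nat -> Mor C) (k : nat) : Mor C :=
  comp C (tM C (idm C (hat B k)) (top C (M k))) (Phi A B M alpha k).

End Defs.

Arguments hom {C} f A B.
Arguments causal {C} A B c.
Arguments preceq {C} A B f g.
Arguments Pure {C} A B X f p.
Arguments hat {C} A k.
Arguments monotone {C} A B f.
Arguments psi_seq {C} A B n girr greg m.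
Arguments regular_seq {C} A B f.
Arguments stateful {C} A B M alpha.
Arguments regular_stateful {C} A B M alpha.
Arguments phi_seq {C} A B M alpha m.
Arguments Phi {C} A B M alpha k.
Arguments FA {C} A B M alpha k.

(* Main.v *)
Require Import Defs.
From Stdlib Require Import Lia PeanoNat.

Section S.
Variable C : DiscardCat.
Local Notation cp := (comp C).
Local Notation tm := (tM C).
Local Notation id := (idm C).
Local Notation to := (tO C).
Local Notation I := (unitO C).
Local Notation tp := (top C).
Local Notation sg := (sig C).

Ltac onorm := repeat rewrite ?tO_assoc, ?tO_unit_l, ?tO_unit_r.

Ltac dcstep :=
  match goal with
  | |- context [dom C (idm C _)] => rewrite dom_id
  | |- context [cod C (idm C _)] => rewrite cod_id
  | |- context [dom C (tM C _ _)] => rewrite dom_tM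
  | |- context [cod C (tM C _ _)] => rewrite cod_tM
  | |- context [dom C (sig C _ _)] => rewrite dom_sig
  | |- context [cod C (sig C _ _)] => rewrite cod_sig
  | |- context [dom C (top C _)] => rewrite dom_top
  | |- context [cod C (top C _)] => rewrite cod_top
  | H : dom C ?f = _ |- context [dom C ?f] => rewrite H
  | H : cod C ?f = _ |- context [cod C ?f] => rewrite H
  | |- context [dom C (comp C ?g ?f)] => rewrite (dom_comp C f g) by dcsolve
  | |- context [cod C (comp C ?g ?f)] => rewrite (cod_comp C f g) by dcsolve
  end
with dcsolve := repeat dcstep; onorm; reflexivity.

Lemma idid X : cp (id X) (id X) = id X.
Proof. pose proof (comp_id_l C (id X)) as H. rewrite cod_id in H. exact H. Qed.

Lemma tMcl X g g' : cod C g' = dom C g ->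
  cp (tm (id X) g) (tm (id X) g') = tm (id X) (cp g g').
Proof. intro H. rewrite <- tM_comp by dcsolve. now rewrite idid. Qed.

Lemma cid_l f X : cod C f = X -> cp (id X) f = f.
Proof. intros <-. apply comp_id_l. Qed.
Lemma cid_r f X : dom C f = X -> cp f (id X) = f.
Proof. intros <-. apply comp_id_r. Qed.

Lemma top_split a b : cp (tp a) (tm (id a) (tp b)) = tp (to a b).
Proof.
  rewrite top_tO.
  assert (E : tp a = tm (tp a) (id I)) by now rewrite tM_unit_r.
  rewrite E at 1. rewrite <- tM_comp by dcsolve.
  rewrite cid_r by dcsolve. rewrite cid_l by dcsolve. reflexivity.
Qed.

Lemma disc2 Bh a b P : cod C P = to (to Bh a) b ->
  cp (tm (id Bh) (tp a)) (cp (tm (id (to Bh a)) (tp b)) P)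
  = cp (tm (id Bh) (tp (to a b))) P.
Proof.
  intro HP. rewrite comp_assoc by dcsolve.
  rewrite <- (tM_id C Bh a), tM_assoc. rewrite tMcl by dcsolve.
  now rewrite top_split.
Qed.

Lemma sigcancel Bh a W g P : dom C g = to W a -> cod C P = to Bh W ->
  cp (tm (id Bh) (cp g (sg a W))) (cp (tm (id Bh) (sg W a)) (tm P (id a)))
  = cp (tm (id Bh) g) (tm P (id a)).
Proof.
  intros Hg HP. rewrite comp_assoc by dcsolve.
  rewrite tMcl by dcsolve. rewrite <- comp_assoc by dcsolve.
  rewrite sig_inv. rewrite cid_r by dcsolve. reflexivity.
Qed.

Lemma pure_trace A0 B0 X f p : Pure A0 B0 X f p -> hom f A0 B0 ->
  f = cp (tm (id B0) (tp X)) p.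
Proof.
  intros [Hp H] [Hfd Hfc].
  destruct (H I f) as [c [[Hcd Hcc] [Hcaus E]]].
  - split; [exact Hfd | rewrite tO_unit_r; exact Hfc].
  - rewrite top_unit, tM_id, tO_unit_r. symmetry. now apply cid_l.
  - unfold causal in Hcaus. rewrite top_unit in Hcaus.
    rewrite cid_l in Hcaus by exact Hcc. rewrite <- Hcaus. exact E.
Qed.

Lemma pure_top a : Pure (to I a) I a (tp a) (id a).
Proof.
  split.
  - split; [rewrite dom_id | rewrite cod_id]; now rewrite tO_unit_l.
  - intros Y g [Hgd Hgc] E. rewrite tO_unit_l in Hgd, Hgc.
    exists g. split; [split; assumption|]. split.
    + unfold causal. rewrite tM_unit_l in E. now rewrite E.
    + rewrite tM_unit_l. symmetry. now apply cid_r.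
Qed.

Lemma step (PP : pseudo_purifiable C) (Ah Bh a b M' : Ob C) (fk fk1 D : Mor C) :
  hom fk Ah Bh ->
  preceq (to Ah a) Bh (cp (tm (id Bh) (tp b)) fk1) (tm fk (tp a)) ->
  hom D (to Ah a) (to (to Bh b) M') ->
  cp (tm (id (to Bh b)) (tp M')) D = fk1 ->
  exists W p1 g, hom p1 Ah (to Bh W) /\ cp (tm (id Bh) (tp W)) p1 = fk /\
    hom g (to W a) (to b M') /\ D = cp (tm (id Bh) g) (tm p1 (id a)).
Proof.
  intros Hfk Hmon [HDd HDc] HD.
  destruct PP as [P1 P2].
  destruct (P1 _ _ _ Hfk) as [Z [p Hp]].
  pose proof (pure_trace _ _ _ _ _ Hp Hfk) as Efk.
  destruct (proj1 Hp) as [Hpd Hpc].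
  destruct Hfk as [Hfkd Hfkc].
  assert (HPa : Pure (to Ah a) Bh (to Z a) (tm fk (tp a)) (tm p (id a))).
  { pose proof (P2 Ah Bh I a I Z a fk (tp a) p (id a)) as H.
    rewrite !tO_unit_r in H. rewrite tO_unit_l in H.
    specialize (H (conj Hfkd Hfkc)).
    assert (hom (tp a) a I) as Ht by (split; dcsolve).
    specialize (H Ht Hp).
    pose proof (pure_top a) as Hpt. rewrite tO_unit_l in Hpt.
    specialize (H Hpt).
    rewrite <- tM_comp in H by dcsolve. rewrite cid_l in H by dcsolve.
    rewrite cid_r in H by dcsolve.
    rewrite !tM_id in H. rewrite cid_l in H by dcsolve.
    rewrite comp_assoc in H by dcsolve. rewrite tMcl in H by dcsolve.
    rewrite sig_inv, tM_id in H. rewrite cid_l in H by dcsolve. exact H. }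
  destruct Hmon as [X [g0 [f0 [[Hg0d Hg0c] [[Hf0d Hf0c] [Eh Eg]]]]]].
  destruct (proj2 HPa X g0 (conj Hg0d Hg0c) Eg) as [c [[Hcd Hcc] [_ Eg0]]].
  set (f2 := cp f0 c).
  assert (Hf2d : dom C f2 = to Z a) by (unfold f2; dcsolve).
  assert (Hf2c : cod C f2 = I) by (unfold f2; dcsolve).
  assert (Eh2 : cp (tm (id Bh) (tp b)) fk1 = cp (tm (id Bh) f2) (tm p (id a))).
  { rewrite Eh, Eg0. rewrite comp_assoc by dcsolve. rewrite tMcl by dcsolve. reflexivity. }
  destruct (P1 _ _ _ (conj Hpd Hpc)) as [X1 [p1 Hp1]].
  destruct (proj1 Hp1) as [Hp1d Hp1c].
  pose proof (pure_trace _ _ _ _ _ Hp1 (conj Hpd Hpc)) as Ep.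
  destruct (P1 _ _ _ (conj Hf2d Hf2c)) as [X2 [p2 Hp2]].
  destruct (proj1 Hp2) as [Hp2d Hp2c].
  pose proof (P2 Ah Bh Z a I X1 X2 p f2 p1 p2 (conj Hpd Hpc) (conj Hf2d Hf2c) Hp1 Hp2) as HQ.
  rewrite tO_unit_r in HQ.
  destruct (proj2 HQ (to b M') D) as [c2 [[Hc2d Hc2c] [_ ED]]].
  { split; [exact HDd | rewrite HDc; now rewrite tO_assoc]. }
  { rewrite <- Eh2, <- HD. apply disc2. exact HDc. }
  exists (to Z X1), p1,
    (cp c2 (cp (sg X2 X1) (cp (tm p2 (id X1)) (tm (id Z) (sg X1 a))))).
  split; [split; [exact Hp1d | rewrite Hp1c; now rewrite tO_assoc]|].
  split.
  { rewrite Efk, Ep. symmetry. apply disc2. exact Hp1c. }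
  split; [split; dcsolve|].
  rewrite ED.
  rewrite tM_assoc. rewrite <- (tM_id C Bh Z), tM_assoc.
  rewrite <- (tMcl Bh c2) by dcsolve.
  rewrite <- (tMcl Bh (sg X2 X1)) by dcsolve.
  rewrite <- (tMcl Bh (tm p2 (id X1))) by dcsolve.
  rewrite <- !comp_assoc by dcsolve. reflexivity.
Qed.

Lemma phi_ext (A B M M' : nat -> Ob C) (al al' : nat -> Mor C) m :
  (forall i, i <= S m -> al i = al' i /\ M i = M' i) ->
  phi_seq A B M al m = phi_seq A B M' al' m.
Proof.
  induction m as [|m IH]; intro H; simpl.
  - now destruct (H 1 (le_n _)).
  - rewrite IH by (intros; apply H; lia).
    destruct (H (S (S m)) (le_n _)) as [-> _].
    destruct (H (S m) ltac:(lia)) as [_ ->]. reflexivity.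
Qed.

Lemma phi_S (A B M : nat -> Ob C) (al : nat -> Mor C) m :
  phi_seq A B M al (S m) =
  cp (tm (id (hat B (S m))) (al (S (S m))))
     (cp (tm (id (hat B (S m))) (sg (M (S m)) (A (S (S m)))))
        (tm (phi_seq A B M al m) (id (A (S (S m)))))).
Proof. reflexivity. Qed.

Lemma back (PP : pseudo_purifiable C) (A B : nat -> Ob C) (f : nat -> Mor C) :
  (forall k, 1 <= k -> hom (f k) (hat A k) (hat B k)) ->
  monotone A B f ->
  forall k, 1 <= k -> forall Mk D, hom D (hat A k) (to (hat B k) Mk) ->
   cp (tm (id (hat B k)) (tp Mk)) D = f k ->
   exists M al, M 0 = I /\
     (forall i, 1 <= i <= k -> hom (al i) (to (A i) (M (i - 1))) (to (B i) (M i))) /\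
     M k = Mk /\ Phi A B M al k = D /\
     (forall i, 1 <= i <= k -> FA A B M al i = f i).
Proof.
  intros Hf Hmon k Hk. induction k as [|k IH]; [lia|].
  intros Mk D [HDd HDc] HD.
  destruct k as [|k'].
  - exists (fun i => match i with 0 => I | _ => Mk end), (fun _ => D).
    split; [reflexivity|]. split.
    { intros i Hi. assert (i = 1) by lia. subst i. simpl.
      simpl in HDd, HDc. rewrite tO_unit_l in HDd, HDc. rewrite tO_unit_r. split; assumption. }
    split; [reflexivity|]. split; [reflexivity|].
    intros i Hi. assert (i = 1) by lia. subst i. exact HD.
  - set (k := S k') in *.
    destruct (step PP (hat A k) (hat B k) (A (S k)) (B (S k)) Mk (f k) (f (S k)) D
               (Hf k ltac:(lia)) (Hmon k ltac:(lia)) (conj HDd HDc) HD)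
      as [W [p1 [g [Hp1 [Ep1 [[Hgd Hgc] ED]]]]]].
    destruct (IH ltac:(unfold k; lia) W p1 Hp1 Ep1)
      as [M0 [al0 [HM0 [Hal0 [HMk [HPhi HFA]]]]]].
    exists (fun i => if Nat.eqb i (S k) then Mk else M0 i),
           (fun i => if Nat.eqb i (S k) then cp g (sg (A (S k)) W) else al0 i).
    assert (Hext : forall j, j <= k ->
      Phi A B (fun i => if Nat.eqb i (S k) then Mk else M0 i)
        (fun i => if Nat.eqb i (S k) then cp g (sg (A (S k)) W) else al0 i) j
      = Phi A B M0 al0 j).
    { intros j Hj. unfold Phi. apply phi_ext. intros i Hi.
      destruct (Nat.eqb_spec i (S k)); [lia|]. split; reflexivity. }
    split; [simpl; exact HM0|]. split.
    { intros i Hi. destruct (Nat.eqb_spec i (S k)).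
      - subst i. replace (S k - 1) with k by lia.
        destruct (Nat.eqb_spec k (S k)); [lia|]. rewrite HMk.
        split; dcsolve.
      - destruct (Nat.eqb_spec (i - 1) (S k)); [lia|]. apply Hal0. lia. }
    split; [now rewrite Nat.eqb_refl|].
    assert (HPhiS : Phi A B (fun i => if Nat.eqb i (S k) then Mk else M0 i)
        (fun i => if Nat.eqb i (S k) then cp g (sg (A (S k)) W) else al0 i) (S k) = D).
    { unfold Phi. replace (S k - 1) with (S k') by (unfold k; lia).
      rewrite phi_S. fold k. rewrite Nat.eqb_refl.
      destruct (Nat.eqb_spec k (S k)); [lia|]. rewrite HMk.
      replace k' with (k - 1) by (unfold k; lia). fold (Phi A B
        (fun i => if Nat.eqb i (S k) then Mk else M0 i)
        (fun i => if Nat.eqb i (S k) then cp g (sg (A (S k)) W) else al0 i) k).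
      rewrite Hext by lia. rewrite HPhi. rewrite sigcancel by first [exact Hgd | exact (proj2 Hp1)].
      symmetry. exact ED. }
    split; [exact HPhiS|].
    intros i Hi. unfold FA. destruct (Nat.eqb_spec i (S k)).
    + subst i. rewrite HPhiS. cbv beta. exact HD.
    + rewrite Hext by lia. rewrite <- HFA by lia. unfold FA.
      destruct (Nat.eqb_spec i (S k)); [lia|]. reflexivity.
Qed.

End S.

Theorem mainTheorem6 (C : DiscardCat) (A B : nat -> Ob C) (f : nat -> Mor C) :
  pseudo_purifiable C ->
  (forall k, 1 <= k -> hom (f k) (hat A k) (hat B k)) ->
  monotone A B f ->
  regular_seq A B f ->
  exists (M : nat -> Ob C) (alpha : nat -> Mor C),
    stateful A B M alpha /\ regular_stateful A B M alpha /\
    (forall k, 1 <= k -> FA A B M alpha k = f k).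
Proof.
  intros PP Hf Hmon [n [A' [B' [Mr [girr [greg [Hn [HAB [Hgirr [Hgreg Hreg]]]]]]]]]].
  assert (Hfn : comp C (tM C (idm C (hat B n)) (top C Mr)) girr = f n).
  { rewrite (Hreg n (le_n _)). rewrite Nat.sub_diag. reflexivity. }
  destruct (back C PP A B f Hf Hmon n Hn Mr girr Hgirr Hfn)
    as [M0 [al0 [HM0 [Hal0 [HMn [HPhin HFA]]]]]].
  set (M := fun i => if Nat.leb i n then M0 i else Mr).
  set (al := fun i => if Nat.leb i n then al0 i else comp C greg (sig C A' Mr)).
  exists M, al.
  assert (HMge : forall i, n <= i -> M i = Mr).
  { intros i Hi. unfold M. destruct (Nat.leb_spec i n).
    - replace i with n by lia. exact HMn.
    - reflexivity. }
  assert (Hext : forall j, j <= n -> Phi A B M al j = Phi A B M0 al0 j).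
  { intros j Hj. unfold Phi. apply phi_ext. intros i Hi. unfold M, al.
    destruct (Nat.leb_spec i n); [|lia]. split; reflexivity. }
  assert (Hpsic : forall m, cod C (psi_seq A B n girr greg m) = tO C (hat B (n + m)) Mr).
  { induction m as [|m IH].
    - rewrite Nat.add_0_r. apply Hgirr.
    - destruct Hgreg as [Hgd Hgc]. simpl psi_seq.
      destruct (HAB (S (n + m)) ltac:(lia)) as [HA HB].
      rewrite Nat.add_succ_r. simpl hat. rewrite HB.
      rewrite cod_comp; rewrite ?cod_tM, ?dom_tM, ?cod_id, ?dom_id, ?Hgc, ?Hgd, ?IH, ?HA;
        rewrite ?tO_assoc; reflexivity. }
  assert (HPhi : forall m, Phi A B M al (n + m) = psi_seq A B n girr greg m).
  { induction m as [|m IH].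
    - rewrite Nat.add_0_r, Hext by lia. exact HPhin.
    - unfold Phi. replace (n + S m - 1) with (S (n + m - 1)) by lia.
      rewrite phi_S. replace (S (S (n + m - 1))) with (S (n + m)) by lia.
      replace (S (n + m - 1)) with (n + m) by lia.
      change (phi_seq A B M al (n + m - 1)) with (Phi A B M al (n + m)).
      rewrite IH. rewrite (HMge (n + m)) by lia.
      unfold al at 1. destruct (Nat.leb_spec (S (n + m)) n); [lia|].
      destruct (HAB (S (n + m)) ltac:(lia)) as [HA _].
      change (psi_seq A B n girr greg (S m)) with (comp C (tM C (idm C (hat B (n + m))) greg)
        (tM C (psi_seq A B n girr greg m) (idm C (A (S (n + m)))))).
      rewrite HA.
      rewrite sigcancel by first [apply Hgreg | apply Hpsic].
      reflexivity. }
  split; [|split].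
  - split.
    + unfold M. simpl. exact HM0.
    + intros i Hi. unfold al. destruct (Nat.leb_spec i n).
      * unfold M. destruct (Nat.leb_spec i n); [|lia].
        destruct (Nat.leb_spec (i - 1) n); [|lia]. apply Hal0. lia.
      * rewrite (HMge (i - 1)) by lia. rewrite (HMge i) by lia.
        destruct (HAB i ltac:(lia)) as [-> ->]. destruct Hgreg as [Hgd Hgc].
        split.
        { rewrite dom_comp; rewrite ?dom_sig, ?cod_sig, ?Hgd; reflexivity. }
        { rewrite cod_comp; rewrite ?dom_sig, ?cod_sig, ?Hgd, ?Hgc; reflexivity. }
  - exists (S n). split; [lia|]. intros k Hk.
    destruct (HAB k ltac:(lia)) as [HAk HBk].
    destruct (HAB (S n) ltac:(lia)) as [HAn HBn].
    rewrite HAk, HAn, HBk, HBn, (HMge k), (HMge (S n)) by lia.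
    unfold al. destruct (Nat.leb_spec k n); [lia|].
    destruct (Nat.leb_spec (S n) n); [lia|]. repeat split; reflexivity.
  - intros k Hk. destruct (Nat.leb_spec k n).
    + unfold FA. rewrite Hext by lia. rewrite <- HFA by lia. unfold FA.
      unfold M. destruct (Nat.leb_spec k n); [|lia]. reflexivity.
    + unfold FA. replace k with (n + (k - n)) by lia.
      rewrite HPhi, HMge by lia. rewrite Hreg by lia.
      replace (n + (k - n) - n) with (k - n) by lia. reflexivity.
Qed.
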